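(* Let $(\mathcal Z,\mathcal W,\phi)$ be a state-flux triple, $\mathcal L$ an L-function on $\mathcal Z$ and $\mathcal V$ a quasipotential corresponding to $\mathcal L$. Then: (i) for any $\rho\in\mathrm{Dom}_{\mathrm{symdiss}}(F)$, $j\in T_\rho\mathcal W$ and $\lambda\in[0,1]$, $$\mathcal L(\rho,j)=\mathcal L_{(1-2\lambda)F}(\rho,j)+\mathcal R^\lambda_F(\rho)-2\lambda\langle F(\rho),j\rangle,\quad\text{with }\mathcal R^\lambda_F(\rho)\ge0;$$ (ii) for any $\rho\in\mathrm{Dom}(F^{\mathrm{asym}})$, $j\in T_\rho\mathcal W$ and $\lambda\in[0,1]$, $$\mathcal L(\rho,j)=\mathcal L_{F-2\lambda F^{\mathrm{sym}}}(\rho,j)+\mathcal R^\lambda_{F^{\mathrm{sym}}}(\rho)-2\lambda\langle F^{\mathrm{sym}}(\rho),j\rangle,\quad\text{with }\mathcal R^\lambda_{F^{\mathrm{sym}}}(\rho)\ge0;$$ (iii) for any $\rho\in\mathrm{Dom}_{\mathrm{symdiss}}(F^{\mathrm{asym}})$, $j\in T_\rho\mathcal W$ and $\lambda\in[0,1]$, $$\mathcal L(\rho,j)=\mathcal L_{F-2\lambda F^{\mathrm{asym}}}(\rho,j)+\mathcal R^\lambda_{F^{\mathrm{asym}}}(\rho)-2\lambda\langle F^{\mathrm{asym}}(\rho),j\rangle,\quad\text{with }\mathcal R^\lambda_{F^{\mathrm{asym}}}(\rho)\ge0.$$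
   Context: A state-flux triple $(\mathcal Z,\mathcal W,\phi)$ consists of differentiable Banach manifolds $\mathcal Z$, $\mathcal W$ and a surjective differentiable map $\phi:\mathcal W\to\mathcal Z$ such that: $T_w\mathcal W$ depends on $w$ only through $\rho=\phi[w]$ (written $T_\rho\mathcal W$); the differential of $\phi$ is a bounded linear map depending only on $\rho$, written $d\phi_\rho:T_\rho\mathcal W\to T_\rho\mathcal Z$; $T_\rho\mathcal W$, $T_\rho\mathcal Z$ have Banach preduals $T^*_\rho\mathcal W$, $T^*_\rho\mathcal Z$ with pairings $\langle\cdot,\cdot\rangle$; $d\phi_\rho^{\mathsf T}:T^*_\rho\mathcal Z\to T^*_\rho\mathcal W$ is the adjoint. An L-function on $\mathcal Z$ is $\mathcal L:\{(\rho,j):\rho\in\mathcal Z,j\in T_\rho\mathcal W\}\to\mathbb R\cup\{\infty\}$ such that for each $\rho$, $\inf\mathcal L(\rho,\cdot)=0$, there is a unique $j^0(\rho)$ with $\mathcal L(\rho,j^0(\rho))=0$, and $\mathcal L(\rho,\cdot)$ is convex and lower semicontinuous; its convex dual is $\mathcal H(\rho,\zeta)=\sup_j\{\langle\zeta,j\rangle-\mathcal L(\rho,j)\}$, $\zeta\in T^*_\rho\mathcal W$. A quasipotential is $\mathcal V:\mathcal Z\to\mathbb R\cup\{\infty\}$ with $\inf\mathcal V=0$ and $\mathcal H(\rho,d\phi_\rho^{\mathsf T}d\mathcal V(\rho))=0$ wherever the Gateaux derivative $d\mathcal V(\rho)$ exists. $\mathrm{Dom}(F)$: set of $\rho$ where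 $j\mapsto\mathcal L(\rho,j)$ is Gateaux differentiable at $0$; driving force $F(\rho):=-d\mathcal L(\rho,0)$. $\mathrm{Dom}_{\mathrm{symdiss}}(F):=\{\rho\in\mathrm{Dom}(F):\mathcal H(\rho,\zeta-F(\rho))=\mathcal H(\rho,-\zeta-F(\rho))\ \forall\zeta\in T^*_\rho\mathcal W\}$. $\mathrm{Dom}(F^{\mathrm{sym}})$: set where $\mathcal V$ is Gateaux differentiable, $F^{\mathrm{sym}}(\rho):=-\frac12d\phi_\rho^{\mathsf T}d\mathcal V(\rho)$; $\mathrm{Dom}(F^{\mathrm{asym}}):=\mathrm{Dom}(F)\cap\mathrm{Dom}(F^{\mathrm{sym}})$, $F^{\mathrm{asym}}(\rho):=F(\rho)+\frac12d\phi_\rho^{\mathsf T}d\mathcal V(\rho)$; $\mathrm{Dom}_{\mathrm{symdiss}}(F^{\mathrm{asym}}):=\mathrm{Dom}(F^{\mathrm{asym}})\cap\mathrm{Dom}_{\mathrm{symdiss}}(F)$. Tilting: for a covector field $G$ ($G(\rho)\in T^*_\rho\mathcal W$) and $\rho$ in $\mathrm{Dom}(F)$ and the domain of $G$, $\mathcal H_G(\rho,\zeta):=\mathcal H(\rho,\zeta+G(\rho)-F(\rho))-\mathcal H(\rho,G(\rho)-F(\rho))$ and $\mathcal L_G(\rho,j):=\sup_\zeta\{\langle\zeta,j\rangle-\mathcal H_G(\rho,\zeta)\}$. Generalised Fisher information: $\mathcal R^\lambda_G(\rho):=-\mathcal H(\rho,-2\lambda G(\rho))$.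
   Formalization: Lower semicontinuity of $\mathcal L(\rho,\cdot)$ in the definition of an L-function is taken for the weak* topology on $T_\rho\mathcal W$ induced by the predual $T^*_\rho\mathcal W$, not for the norm topology. The statement above fails without it. *)

(* Defs.v *)
From HB Require Import structures.
From mathcomp Require Import all_boot all_order all_algebra.
From mathcomp Require Import all_classical all_reals all_analysis.
Set Implicit Arguments. Unset Strict Implicit. Unset Printing Implicit Defensive.
Import Order.TTheory GRing.Theory Num.Theory.
Import numFieldNormedType.Exports.
Local Open Scope classical_set_scope.
Local Open Scope ring_scope.

Definition is_predual (R : realType) (X : normedModType R)
  (Y : completeNormedModType R) (p : Y -> X -> R) : Prop :=
  [/\ (forall y (a : R) (u v : X), p y (a *: u + v) = a * p y u + p y v),
      (forall x (a : R) (u v : Y), p (a *: u + v) x = a * p u x + p v x),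
      (forall y x, `|p y x| <= `|y| * `|x|),
      (forall x (e : R), 0 < e -> exists y : Y, `|y| <= 1 /\ `|x| - e < `|p y x|)
    & (forall f : Y -> R, (forall (a : R) (u v : Y), f (a *: u + v) = a * f u + f v) ->
         continuous f -> exists x : X, forall y, f y = p y x)].

Record state_flux (R : realType) := StateFlux {
  sfZ : Type;
  sfW : Type;
  sfphi : sfW -> sfZ;
  sfphi_surj : forall z : sfZ, exists w, sfphi w = z;
  (* T_rho W (depends on w only through rho = phi w) and T_rho Z *)
  TW : sfZ -> normedModType R;
  TZ : sfZ -> normedModType R;
  TWs : sfZ -> completeNormedModType R;
  TZs : sfZ -> completeNormedModType R;
  pairW : forall rho, TWs rho -> TW rho -> R;
  pairZ : forall rho, TZs rho -> TZ rho -> R;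
  pairW_predual : forall rho, is_predual (@pairW rho);
  pairZ_predual : forall rho, is_predual (@pairZ rho);
  dphi : forall rho, TW rho -> TZ rho;
  dphi_linear : forall rho (a : R) (u v : TW rho),
      dphi (a *: u + v) = a *: dphi u + dphi v;
  dphi_cont : forall rho, continuous (@dphi rho);
  dphiT : forall rho, TZs rho -> TWs rho;
  dphiT_adj : forall rho (z : TZs rho) (j : TW rho),
      pairW (dphiT z) j = pairZ z (dphi j);
  (* a chart of Z centred at rho (used to define Gateaux derivatives on Z) *)
  chartZ : forall rho, TZ rho -> sfZ;
  chartZ0 : forall rho, @chartZ rho 0 = rho
}.

Arguments TW {R} s rho.
Arguments TZ {R} s rho.
Arguments TWs {R} s rho.
Arguments TZs {R} s rho.
Arguments chartZ {R s rho}.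
Arguments pairW {R s rho}.
Arguments pairZ {R s rho}.
Arguments dphiT {R s rho}.

Section Defs.
Context {R : realType} {S : state_flux R}.
Local Open Scope ereal_scope.

Definition econvex (X : lmodType R) (f : X -> \bar R) : Prop :=
  forall (x y : X) (t : R), (0 <= t <= 1)%R ->
    f (t *: x + (1 - t) *: y)%R <= t%:E * f x + (1 - t)%:E * f y.

(* lower semicontinuity for the weak topology sigma(T_rho W, T^*_rho W)
   induced by the predual pairing (basic neighbourhoods: finitely many
   functionals from the predual and a radius e). *)
Definition weak_lsc (rho : sfZ S) (f : TW S rho -> \bar R) : Prop :=
  forall (x : TW S rho) (a : \bar R), a < f x ->
    exists (ys : seq (TWs S rho)) (e : R), (0 < e)%R /\
      forall x' : TW S rho,
        (forall y, y \in ys -> `|pairW y (x' - x)| < e)%R -> a < f x'.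

Definition is_Lfunction (L : forall rho : sfZ S, TW S rho -> \bar R) : Prop :=
  forall rho : sfZ S,
  [/\ (forall j, L rho j != -oo),
      ereal_inf (range (L rho)) = 0,
      (exists! j0, L rho j0 = 0),
      econvex (L rho)
    & weak_lsc (L rho)].

Definition Hdual (L : forall rho : sfZ S, TW S rho -> \bar R)
  (rho : sfZ S) (zeta : TWs S rho) : \bar R :=
  ereal_sup [set (pairW zeta j)%:E - L rho j | j in [set: TW S rho]].

Definition gateaux (X : normedModType R) (Y : completeNormedModType R)
  (p : Y -> X -> R) (f : X -> \bar R) (x : X) (xi : Y) : Prop :=
  f x \is a fin_num /\
  forall v : X,
    (\forall t \near (0%R : R)^', f (x + t *: v)%R \is a fin_num) /\
    ((fun t : R => ((fine (f (x + t *: v)%R) - fine (f x)) / t)%R) @ (0%R : R)^'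
       --> p xi v).

(* rho in Dom(F) with -F(rho) = eta, i.e. d L(rho,.)(0) = eta *)
Definition dL0 (L : forall rho : sfZ S, TW S rho -> \bar R)
  (rho : sfZ S) (eta : TWs S rho) : Prop :=
  gateaux (@pairW R S rho) (L rho) 0%R eta.

Definition dV (V : sfZ S -> \bar R) (rho : sfZ S) (xi : TZs S rho) : Prop :=
  gateaux (@pairZ R S rho) (fun v => V (chartZ v)) 0%R xi.

Definition is_quasipotential (L : forall rho : sfZ S, TW S rho -> \bar R)
  (V : sfZ S -> \bar R) : Prop :=
  (forall rho, V rho != -oo) /\
  ereal_inf (range V) = 0 /\
  forall rho (xi : TZs S rho), dV V xi -> Hdual L (dphiT xi) = 0.

Definition symdiss (L : forall rho : sfZ S, TW S rho -> \bar R)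
  (rho : sfZ S) (F0 : TWs S rho) : Prop :=
  forall zeta : TWs S rho, Hdual L (zeta - F0)%R = Hdual L (- zeta - F0)%R.

(* ---------- tilting (F0 = F(rho), G0 = G(rho)) ---------- *)
Definition Htilt (L : forall rho : sfZ S, TW S rho -> \bar R)
  (rho : sfZ S) (F0 G0 : TWs S rho) (zeta : TWs S rho) : \bar R :=
  Hdual L (zeta + G0 - F0)%R - Hdual L (G0 - F0)%R.

Definition Ltilt (L : forall rho : sfZ S, TW S rho -> \bar R)
  (rho : sfZ S) (F0 G0 : TWs S rho) (j : TW S rho) : \bar R :=
  ereal_sup [set (pairW zeta j)%:E - Htilt L F0 G0 zeta | zeta in [set: TWs S rho]].

Definition Fisher (L : forall rho : sfZ S, TW S rho -> \bar R)
  (rho : sfZ S) (lam : R) (G0 : TWs S rho) : \bar R :=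
  - Hdual L (- ((2 * lam) *: G0))%R.

End Defs.

(* Main.v *)
Require Import Defs.

From HB Require Import structures.
From mathcomp Require Import all_boot all_order all_algebra.
From mathcomp Require Import all_classical all_reals all_analysis.
From mathcomp Require Import ring lra.
Set Implicit Arguments. Unset Strict Implicit. Unset Printing Implicit Defensive.
Import Order.TTheory GRing.Theory Num.Theory.
Import numFieldNormedType.Exports.
Local Open Scope classical_set_scope.
Local Open Scope ring_scope.

Section HB.
Variable R : realType.

Definition sublin (V : lmodType R) (p : V -> R) :=
  (forall x y, p (x + y) <= p x + p y) /\
  (forall (t : R) x, 0 <= t -> p (t *: x) = t * p x).

Lemma sublin0 (V : lmodType R) (p : V -> R) : sublin p -> p 0 = 0.
Proof. by move=> [_ h]; have := h 0 0 (lexx 0); rewrite scale0r mul0r. Qed.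

Lemma sublinN (V : lmodType R) (p : V -> R) x : sublin p -> 0 <= p x + p (- x).
Proof.
move=> hp; have := hp.1 x (- x); rewrite subrr (sublin0 hp) //.
Qed.

Lemma step (V : lmodType R) (p : V -> R) v : sublin p ->
  exists q : V -> R, sublin q /\ (forall x, q x <= p x) /\ q v + q (- v) = 0.
Proof.
move=> hp; have [p1 p2] := hp.
pose A x := [set p (x + t *: v) - t * p v | t in [set t : R | 0 <= t]].
have An x : A x !=set0.
  by exists (p (x + 0 *: v) - 0 * p v); exists 0 => //=.
have Alb x : lbound (A x) (- p (- x)).
  move=> _ [t t0 <-]; have := p1 (x + t *: v) (- x).
  rewrite addrAC subrr add0r p2 //; lra.
pose q x := inf (A x).
have qle x t : 0 <= t -> q x <= p (x + t *: v) - t * p v.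
  by move=> t0; apply: ge_inf; [exists (- p (- x)) | exists t].
have qge x c : lbound (A x) c -> c <= q x.
  by move=> h; apply: lb_le_inf.
have qp x : q x <= p x by have := qle x 0 (lexx 0); rewrite scale0r addr0 mul0r subr0.
have q1 x y : q (x + y) <= q x + q y.
  suff : q (x + y) - q y <= q x by lra.
  apply: (qge) => _ [s s0 <-].
  suff : q (x + y) - (p (x + s *: v) - s * p v) <= q y by lra.
  apply: (qge) => _ [t t0 <-].
  have := qle (x + y) (s + t) (addr_ge0 s0 t0).
  have -> : x + y + (s + t) *: v = (x + s *: v) + (y + t *: v).
    by rewrite scalerDl addrACA.
  have := p1 (x + s *: v) (y + t *: v); lra.
have q0 : q 0 = 0.
  apply/eqP; rewrite eq_le; apply/andP; split.
    by have := qp 0; rewrite (sublin0 hp).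
  by apply: (qge) => a /Alb; rewrite oppr0 (sublin0 hp) oppr0.
have homle t x : 0 < t -> t * q x <= q (t *: x).
  move=> t0; apply: (qge) => _ [s s0 <-].
  have ht : t != 0 by rewrite gt_eqF.
  have e : t *: (x + (s / t) *: v) = t *: x + s *: v.
    by rewrite scalerDr scalerA mulrCA mulfV // mulr1.
  rewrite -e p2; last exact: ltW.
  have := qle x (s / t) (divr_ge0 s0 (ltW t0)).
  move=> /(ler_wpM2l (ltW t0)).
  have -> : t * (p (x + s / t *: v) - s / t * p v) = t * p (x + s / t *: v) - s * p v.
    by rewrite mulrBr mulrA mulrCA mulfV // mulr1.
  by [].
have q2 t x : 0 <= t -> q (t *: x) = t * q x.
  rewrite le_eqVlt => /orP [/eqP <-|t0]; first by rewrite scale0r mul0r q0.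
  apply/eqP; rewrite eq_le homle // andbT.
  have ti : 0 < t^-1 by rewrite invr_gt0.
  have := homle _ (t *: x) ti; rewrite scalerA mulVf ?gt_eqF // scale1r.
  move=> /(ler_wpM2l (ltW t0)); by rewrite mulrA mulfV ?gt_eqF // mul1r.
have hq : sublin q.
  split; [exact: q1 | exact: q2].
exists q; split => //; split => //.
apply/eqP; rewrite eq_le sublinN // andbT.
have := qle (- v) 1 ler01; rewrite scale1r addNr (sublin0 hp) mul1r.
have := qp v; lra.
Qed.

Lemma iter_step (V : lmodType R) (p : V -> R) (vs : seq V) : sublin p ->
  exists q : V -> R, sublin q /\ (forall x, q x <= p x) /\
    (forall v, v \in vs -> q v + q (- v) = 0).
Proof.
elim: vs p => [|v vs IH] p hp; first by exists p.
have [q1 [hq1 [q1p q1v]]] := IH p hp.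
have [q2 [hq2 [q2p q2v]]] := step v hq1.
exists q2; split => //; split; first by move=> x; exact: le_trans (q2p x) (q1p x).
move=> w; rewrite in_cons => /orP [/eqP ->|wi] //.
apply/eqP; rewrite eq_le sublinN // andbT.
by have := q1v w wi; have := q2p w; have := q2p (- w); lra.
Qed.

Lemma sublin_sum (V : lmodType R) (q : V -> R) (I : Type) (r : seq I) (f : I -> V) :
  sublin q -> q (\sum_(i <- r) f i) <= \sum_(i <- r) q (f i).
Proof.
move=> hq; elim: r => [|i r IH]; first by rewrite !big_nil (sublin0 hq).
rewrite !big_cons; apply: le_trans (hq.1 _ _) _; exact: lerD.
Qed.

Lemma linmin n (q : 'rV[R]_n -> R) : sublin q ->
  (forall i, q (delta_mx 0 i) + q (- delta_mx 0 i) = 0) ->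
  forall u : 'rV[R]_n, \sum_i u 0 i * q (delta_mx 0 i) <= q u.
Proof.
move=> hq hd u.
have qsc i a : q (a *: delta_mx 0 i) = a * q (delta_mx 0 i).
  have [a0|a0] := leP 0 a; first by rewrite hq.2.
  have -> : a *: delta_mx 0 i = (- a) *: (- delta_mx (0 : 'I_1) i).
    by rewrite scalerN scaleNr opprK.
  rewrite hq.2; last by rewrite oppr_ge0 ltW.
  have -> : q (- delta_mx 0 i) = - q (delta_mx 0 i) by have := hd i; lra.
  by rewrite mulNr mulrN opprK.
have := sublin_sum (index_enum 'I_n) (fun i => (- u) 0 i *: delta_mx 0 i) hq.
rewrite -row_sum_delta.
under eq_bigr do rewrite qsc mxE mulNr.
rewrite sumrN.
have := sublinN u hq; lra.
Qed.

Lemma HBrow n (p : 'rV[R]_n -> R) : sublin p ->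
  exists c : 'I_n -> R, forall u : 'rV[R]_n, \sum_i u 0 i * c i <= p u.
Proof.
move=> hp.
have [q [hq [qp qv]]] := iter_step [seq delta_mx 0 i | i <- enum 'I_n] hp.
exists (fun i => q (delta_mx 0 i)) => u.
apply: le_trans (linmin hq _ u) (qp u) => i.
by apply: qv; apply: map_f; rewrite mem_enum.
Qed.

Definition convexR (V : lmodType R) (K : V -> R) := forall x y (t : R),
  0 <= t <= 1 -> K (t *: x + (1 - t) *: y) <= t * K x + (1 - t) * K y.

Lemma dirder (V : lmodType R) (K : V -> R) (u0 : V) : convexR K ->
  exists P : V -> R, sublin P /\ forall v, P v <= K (u0 + v) - K u0.
Proof.
move=> cK.
pose A v := [set (K (u0 + t *: v) - K u0) / t | t in [set t : R | 0 < t]].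
have An v : A v !=set0.
  by exists ((K (u0 + 1 *: v) - K u0) / 1); exists 1 => //=.
have Alb v : lbound (A v) (K u0 - K (u0 - v)).
  move=> _ [t t0 <-]; rewrite /= in t0; rewrite ler_pdivlMr //.
  have t1 : 0 < 1 + t by rewrite addr_gt0.
  pose a := (1 + t)^-1.
  have ha : (1 + t) * a = 1 by rewrite mulfV // gt_eqF.
  have hb : (1 + t) * (1 - a) = t by rewrite mulrBr ha mulr1; lra.
  have a01 : 0 <= a <= 1.
    rewrite invr_ge0 ltW //= invr_le1 ?unitfE ?gt_eqF //; lra.
  have := cK (u0 + t *: v) (u0 - v) a a01.
  have -> : a *: (u0 + t *: v) + (1 - a) *: (u0 - v) = u0.
    rewrite scalerDr scalerBr !scalerA addrACA -scalerDl -scalerBl.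
    have -> : a + (1 - a) = 1 by rewrite addrC subrK.
    have -> : a * t - (1 - a) = 0.
      by move: ha; rewrite mulrDl mul1r; lra.
    by rewrite scale1r scale0r addr0.
  move=> /(ler_wpM2l (ltW t1)); rewrite mulrDr !mulrA ha hb mul1r.
  nra.
pose P v := inf (A v).
have Ple v t : 0 < t -> P v <= (K (u0 + t *: v) - K u0) / t.
  by move=> t0; apply: ge_inf; [exists (K u0 - K (u0 - v)) | exists t].
have Pge v c : lbound (A v) c -> c <= P v.
  by move=> h; apply: lb_le_inf.
have P0 : P 0 = 0.
  apply/eqP; rewrite eq_le; apply/andP; split.
    by have := Ple 0 1 ltr01; rewrite scaler0 addr0 subrr mul0r.
  by apply: (Pge) => _ [t t0 <-]; rewrite scaler0 addr0 subrr mul0r.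
have homle l v : 0 < l -> l * P v <= P (l *: v).
  move=> l0; apply: (Pge) => _ [t t0 <-].
  have tl : 0 < t * l by rewrite mulr_gt0.
  have := Ple v (t * l) tl; rewrite -scalerA.
  move=> /(ler_wpM2l (ltW l0)).
  have -> : l * ((K (u0 + t *: (l *: v)) - K u0) / (t * l)) =
            (K (u0 + t *: (l *: v)) - K u0) / t.
    by field; rewrite !gt_eqF.
  by [].
have P2 l v : 0 <= l -> P (l *: v) = l * P v.
  rewrite le_eqVlt => /orP [/eqP <-|l0]; first by rewrite scale0r mul0r P0.
  apply/eqP; rewrite eq_le homle // andbT.
  have li : 0 < l^-1 by rewrite invr_gt0.
  have := homle _ (l *: v) li; rewrite scalerA mulVf ?gt_eqF // scale1r.
  move=> /(ler_wpM2l (ltW l0)).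
  by rewrite mulrA mulfV ?gt_eqF // mul1r.
have P1 v w : P (v + w) <= P v + P w.
  suff : P (v + w) - P w <= P v by lra.
  apply: (Pge) => _ [s s0 <-]; rewrite /= in s0.
  suff : P (v + w) - (K (u0 + s *: v) - K u0) / s <= P w by lra.
  apply: (Pge) => _ [t t0 <-]; rewrite /= in t0.
  have st : 0 < s + t by rewrite addr_gt0.
  pose a := t / (s + t).
  pose r := a * s.
  have r0 : 0 < r by rewrite mulr_gt0 // divr_gt0.
  have hr : (1 - a) * t = r by rewrite /r /a; field; rewrite gt_eqF.
  have a01 : 0 <= a <= 1.
    rewrite /a divr_ge0 ?(ltW t0) ?(ltW st) //= ler_pdivrMr // mul1r; lra.
  have := cK (u0 + s *: v) (u0 + t *: w) a a01.
  have -> : a *: (u0 + s *: v) + (1 - a) *: (u0 + t *: w) = u0 + r *: (v + w).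
    rewrite !scalerDr !scalerA addrACA -scalerDl hr.
    by rewrite -/r (addrC a) subrK scale1r.
  set X := K (u0 + s *: v); set Y := K (u0 + t *: w); set Z := K (u0 + r *: (v + w)).
  move=> hZ.
  have := Ple (v + w) r r0; rewrite -/Z.
  have : (Z - K u0) / r <= (X - K u0) / s + (Y - K u0) / t.
    have e : (X - K u0) / s + (Y - K u0) / t =
             (a * X + (1 - a) * Y - K u0) / r.
      by rewrite /r /a; field; rewrite !gt_eqF.
    rewrite e ler_pM2r ?invr_gt0 //; lra.
  lra.
exists P; split; first by split.
move=> v; have := Ple v 1 ltr01; by rewrite scale1r divr1.
Qed.


Lemma inf1 (B : set R) c s : B !=set0 -> has_lbound B -> 0 <= s ->
  (forall b, B b -> c <= s * b) -> c <= s * inf B.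
Proof.
move=> Bn Bl; rewrite le_eqVlt => /orP [/eqP <-|s0] h.
  by have [b Bb] := Bn; have := h b Bb; rewrite !mul0r.
rewrite -ler_pdivrMl //; apply: lb_le_inf => // b Bb.
by rewrite ler_pdivrMl //; apply: h.
Qed.

Lemma inf2 (A B : set R) c t s : A !=set0 -> has_lbound A ->
  B !=set0 -> has_lbound B -> 0 <= t -> 0 <= s ->
  (forall a b, A a -> B b -> c <= t * a + s * b) -> c <= t * inf A + s * inf B.
Proof.
move=> An Al Bn Bl t0 s0 h.
suff : c - s * inf B <= t * inf A by lra.
apply: inf1 => // a Aa.
suff : c - t * a <= s * inf B by lra.
apply: inf1 => // b Bb.
have := h a b Aa Bb; lra.
Qed.

Unset Implicit Arguments.
Section FM.
Variables (S : state_flux R) (L : forall rho : sfZ S, TW S rho -> \bar R).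
Hypothesis hL : is_Lfunction L.
Variable rho : sfZ S.

Let pl1 := let: And5 h _ _ _ _ := pairW_predual rho in h.
Let pl2 := let: And5 _ h _ _ _ := pairW_predual rho in h.

Lemma pX0 (y : TWs S rho) : pairW y (0 : TW S rho) = 0.
Proof. have := pl1 y 1 0 0; rewrite scale1r addr0 mul1r; lra. Qed.
Lemma pXZ (y : TWs S rho) a (u : TW S rho) : pairW y (a *: u) = a * pairW y u.
Proof. by have := pl1 y a u 0; rewrite addr0 pX0 addr0. Qed.
Lemma pXD (y : TWs S rho) (u v : TW S rho) : pairW y (u + v) = pairW y u + pairW y v.
Proof. by have := pl1 y 1 u v; rewrite scale1r mul1r. Qed.
Lemma pXB (y : TWs S rho) (u v : TW S rho) : pairW y (u - v) = pairW y u - pairW y v.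
Proof. by rewrite pXD -scaleN1r pXZ mulN1r. Qed.
Lemma pY0 (x : TW S rho) : pairW (0 : TWs S rho) x = 0.
Proof. have := pl2 x 1 0 0; rewrite scale1r addr0 mul1r; lra. Qed.
Lemma pYZ (x : TW S rho) a (u : TWs S rho) : pairW (a *: u) x = a * pairW u x.
Proof. by have := pl2 x a u 0; rewrite addr0 pY0 addr0. Qed.
Lemma pYD (x : TW S rho) (u v : TWs S rho) : pairW (u + v) x = pairW u x + pairW v x.
Proof. by have := pl2 x 1 u v; rewrite scale1r mul1r. Qed.
Lemma pYsum (x : TW S rho) (I : Type) (r : seq I) (f : I -> TWs S rho) :
  pairW (\sum_(i <- r) f i) x = \sum_(i <- r) pairW (f i) x.
Proof.
elim: r => [|i r IH]; first by rewrite !big_nil pY0.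
by rewrite !big_cons pYD IH.
Qed.

Lemma L_ge0 (j : TW S rho) : (0 <= L rho j)%E.
Proof.
have [_ h _ _ _] := hL rho; rewrite -h; apply: ereal_inf_lbound; by exists j.
Qed.

Definition LS (x : TW S rho) : \bar R :=
  ereal_sup [set ((pairW zeta x)%:E - Hdual L zeta)%E | zeta in [set: TWs S rho]].

Lemma LS_le (x : TW S rho) : (LS x <= L rho x)%E.
Proof.
apply: ge_ereal_sup => _ [z _ <-].
have hH : ((pairW z x)%:E - L rho x <= Hdual L z)%E.
  by apply: ereal_sup_ubound; exists x.
case E: (L rho x) => [l| |]; last 2 first.
- by rewrite leey.
- by have := L_ge0 x; rewrite E.
rewrite E in hH.
have := leeB (lexx (pairW z x)%:E) hH.
by rewrite -EFinB; have -> : pairW z x - (pairW z x - l) = l by lra.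
Qed.

Lemma LS_ge_a (x : TW S rho) (a : R) : (a%:E < L rho x)%E -> (a%:E <= LS x)%E.
Proof.
move=> ha.
have [_ _ [j0 [j00 _]] cvx lsc] := hL rho.
have [ys [e [e0 he]]] := lsc x a%:E ha.
pose n := size ys.
pose T (x' : TW S rho) : 'rV[R]_n := \row_(i < n) pairW (nth 0 ys i) x'.
pose N (u : 'rV[R]_n) := \sum_i `|u 0 i|.
have N0 u : 0 <= N u by apply: sumr_ge0 => i _.
have ND u w : N (u + w) <= N u + N w.
  rewrite /N -big_split /=; apply: ler_sum => i _; rewrite mxE; exact: ler_normD.
have NZ c u : N (c *: u) = `|c| * N u.
  rewrite /N mulr_sumr; apply: eq_bigr => i _; by rewrite mxE normrM.
pose M := `|a| / e.
have M0 : 0 <= M by rewrite divr_ge0 // ltW.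
pose B u := [set fine (L rho x') + M * N (T x' - u) |
              x' in [set x' | L rho x' \is a fin_num]].
have Bn u : B u !=set0.
  by exists (fine (L rho j0) + M * N (T j0 - u)); exists j0 => //=; rewrite j00.
have Bl u : lbound (B u) 0.
  move=> _ [x' /= fx' <-]; apply: addr_ge0; last exact: mulr_ge0.
  by rewrite -lee_fin fineK //; apply: L_ge0.
have Bhl u : has_lbound (B u) by exists 0.
pose K u := inf (B u).
have Kle x' : L rho x' \is a fin_num -> K (T x') <= fine (L rho x').
  move=> fx'; apply: ge_inf => //; exists x' => //.
  have -> : N (T x' - T x') = 0.
    by rewrite subrr /N big1 // => i _; rewrite mxE normr0.
  by rewrite mulr0 addr0.
have TL t (u v : TW S rho) : T (t *: u + (1 - t) *: v) = t *: T u + (1 - t) *: T v.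
  by apply/rowP => i; rewrite !mxE pXD !pXZ.
have cK : convexR K.
  move=> u w t /andP [t0 t1].
  apply: inf2 => //; first lra.
  move=> _ _ [x1 /= f1 <-] [x2 /= f2 <-].
  pose x' := t *: x1 + (1 - t) *: x2.
  have hc := cvx x1 x2 t (introT andP (conj t0 t1)).
  rewrite -(fineK f1) -(fineK f2) in hc.
  have fx' : L rho x' \is a fin_num.
    rewrite fin_numE; apply/andP; split; first by have [h _ _ _ _] := hL rho; exact: h.
    rewrite -ltey; apply: le_lt_trans hc _; by rewrite ltey.
  rewrite -(fineK fx') in hc.
  move: hc; rewrite -!EFinM -EFinD lee_fin => hc.
  apply: le_trans (ge_inf (Bhl _) _) _.
    by exists x'.
  rewrite TL.
  have -> : t *: T x1 + (1 - t) *: T x2 - (t *: u + (1 - t) *: w) =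
            t *: (T x1 - u) + (1 - t) *: (T x2 - w).
    by rewrite !scalerBr addrACA opprD.
  have := ND (t *: (T x1 - u)) ((1 - t) *: (T x2 - w)).
  rewrite !NZ !ger0_norm //; last lra.
  move=> hN.
  have := ler_wpM2l M0 hN.
  have := N0 (T x1 - u); have := N0 (T x2 - w).
  nra.
have Ka : a <= K (T x).
  apply: lb_le_inf => // _ [x' /= fx' <-].
  have Lx'0 : 0 <= fine (L rho x') by rewrite -lee_fin fineK //; apply: L_ge0.
  have NM : 0 <= M * N (T x' - T x) by apply: mulr_ge0.
  have [[y [yi hy]]|H] := pselect (exists y, y \in ys /\ e <= `|pairW y (x' - x)|).
    have iy : (index y ys < n)%N by rewrite index_mem.
    have hN : e <= N (T x' - T x).
      apply: le_trans hy _.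
      rewrite /N (bigD1 (Ordinal iy)) //= !mxE nth_index // -pXB.
      by rewrite lerDl; apply: sumr_ge0 => i _.
    have : M * e <= M * N (T x' - T x) by apply: ler_wpM2l.
    have -> : M * e = `|a| by rewrite /M mulrAC -mulrA mulfV ?gt_eqF // mulr1.
    have := ler_norm a; lra.
  have : (a%:E < L rho x')%E.
    apply: he => y yi; rewrite ltNge; apply/negP => h; apply: H; by exists y.
  rewrite -(fineK fx') lte_fin; lra.
have [P [hP Pb]] := dirder (T x) cK.
have [c hc] := HBrow hP.
pose z := \sum_(i < n) c i *: nth 0 ys i.
have pz (x' : TW S rho) : pairW z x' = \sum_(i < n) c i * pairW (nth 0 ys i) x'.
  by rewrite /z pYsum; apply: eq_bigr => i _; rewrite pYZ.
have key x' : L rho x' \is a fin_num ->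
    a + pairW z x' - pairW z x <= fine (L rho x').
  move=> fx'.
  have := hc (T x' - T x); have := Pb (T x' - T x).
  have -> : T x + (T x' - T x) = T x' by rewrite addrC subrK.
  have -> : \sum_i (T x' - T x) 0 i * c i = pairW z x' - pairW z x.
    rewrite !pz -sumrB; apply: eq_bigr => i _; rewrite !mxE; lra.
  have := Kle x' fx'; lra.
have Hz : (Hdual L z <= (pairW z x - a)%:E)%E.
  apply: ge_ereal_sup => _ [j _ <-].
  case E: (L rho j) => [l| |].
  - have fj : L rho j \is a fin_num by rewrite E.
    have := key j fj; rewrite E /= -EFinB lee_fin; lra.
  - by rewrite /= leNye.
  - by have := L_ge0 j; rewrite E.
apply: le_ereal_sup_tmp; exists ((pairW z x)%:E - Hdual L z)%E; first by exists z.
have := leeB (lexx (pairW z x)%:E) Hz.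
by rewrite -EFinB; have -> : pairW z x - (pairW z x - a) = a by lra.
Qed.

Lemma FM (x : TW S rho) : L rho x = LS x.
Proof.
apply/eqP; rewrite eq_le LS_le andbT.
case E: (LS x) => [s| |]; last 2 first.
- by rewrite leey.
- have : ((-1)%:E < L rho x)%E by apply: lt_le_trans (L_ge0 x); rewrite lte_fin; lra.
  by move/LS_ge_a; rewrite E.
rewrite leNgt; apply/negP => h.
case F: (L rho x) h => [l| |] h.
- have := LS_ge_a x ((s + l) / 2); rewrite E F !lte_fin lee_fin.
  rewrite lte_fin in h.
  move=> /(_ ltac:(lra)); lra.
- have := LS_ge_a x (s + 1); rewrite E F lee_fin ltry => /(_ isT); lra.
- by have := L_ge0 x; rewrite F.
Qed.
End FM.
End HB.
Arguments pX0 {R S rho}. Arguments pXZ {R S rho}. Arguments pXD {R S rho}.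
Arguments pY0 {R S rho}. Arguments pYZ {R S rho}. Arguments pYD {R S rho}.
Arguments L_ge0 {R S L} hL {rho}. Arguments FM {R S L} hL {rho}.
Arguments LS {R S}.

Section Main.
Variables (R : realType) (S : state_flux R) (L : forall rho : sfZ S, TW S rho -> \bar R).
Hypothesis hL : is_Lfunction L.
Variable rho : sfZ S.
Local Notation Y := (TWs S rho).
Local Notation X := (TW S rho).

Lemma pYN (x : X) (u : Y) : pairW (- u) x = - pairW u x.
Proof. by rewrite -scaleN1r pYZ mulN1r. Qed.

Lemma Hlb (z : Y) (j : X) : ((pairW z j)%:E - L rho j <= Hdual L z)%E.
Proof. by apply: ereal_sup_ubound; exists j. Qed.

Lemma HnNy (z : Y) : Hdual L z != -oo%E.
Proof.
have [_ _ [j0 [j00 _]] _ _] := hL rho.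
have := Hlb z j0; rewrite j00 sube0.
by apply: contraTneq => ->; rewrite leeNy_eq.
Qed.

Lemma Hle0P (z : Y) : (Hdual L z <= 0)%E <-> (forall j, ((pairW z j)%:E <= L rho j)%E).
Proof.
split.
  move=> h j; have := le_trans (Hlb z j) h.
  case: (L rho j) => [l| |] //=; last by rewrite leey.
  by rewrite -EFinB lee_fin subr_le0.
move=> h; apply: ge_ereal_sup => _ [j _ <-].
have := h j; case: (L rho j) => [l| |] //=; last by rewrite addeNy leNye.
by rewrite -EFinB !lee_fin subr_le0.
Qed.

Lemma H0 : (Hdual L (0%R : Y) <= 0)%E.
Proof. by apply/Hle0P => j; rewrite pY0; apply: L_ge0. Qed.

Lemma Hsc (z : Y) (lam : R) : 0 <= lam <= 1 -> (Hdual L z <= 0)%E ->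
  (Hdual L (lam *: z) <= 0)%E.
Proof.
move=> /andP [l0 l1] /Hle0P h; apply/Hle0P => j.
have := h j; have := L_ge0 hL j; rewrite pYZ.
case: (L rho j) => [l| |] //=; try by move=> *; rewrite leey.
rewrite !lee_fin => h1 h2; nra.
Qed.

Lemma fisher_ok (lam : R) (G : Y) : 0 <= lam <= 1 ->
  (Hdual L (- (2 *: G))%R <= 0)%E ->
  Hdual L (- ((2 * lam) *: G)) \is a fin_num /\ (0 <= Fisher L lam G)%E.
Proof.
move=> hl h.
have e : - ((2 * lam) *: G) = lam *: (- (2 *: G)) by rewrite scalerN scalerA mulrC.
have h' := Hsc _ _ hl h; rewrite -e in h'.
split.
  rewrite fin_numE HnNy /=; apply: contraTneq h' => ->; by rewrite leye_eq.
by rewrite /Fisher oppe_ge0.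
Qed.

Lemma sup_shift (T : Type) (f : T -> \bar R) (c : R) :
  ereal_sup [set (f t + c%:E)%E | t in [set: T]] =
  (ereal_sup [set f t | t in [set: T]] + c%:E)%E.
Proof.
apply/eqP; rewrite eq_le; apply/andP; split.
  apply: ge_ereal_sup => _ [t _ <-]; apply: leeD2r.
  by apply: ereal_sup_ubound; exists t.
rewrite -leeBrDr //.
apply: ge_ereal_sup => _ [t _ <-].
rewrite leeBrDr //.
by apply: ereal_sup_ubound; exists t.
Qed.

Lemma tilt (F0 G0 Gp : Y) (lam : R) (j : X) :
  G0 - F0 = - ((2 * lam) *: Gp) ->
  Hdual L (- ((2 * lam) *: Gp)) \is a fin_num ->
  L rho j = (Ltilt L F0 G0 j + Fisher L lam Gp - ((2 * lam) * pairW Gp j)%:E)%E.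
Proof.
move=> eD fD.
set D := G0 - F0.
have fD' : Hdual L D \is a fin_num by rewrite /D eD.
set h := fine (Hdual L D).
have hE : Hdual L D = h%:E by rewrite fineK.
pose f z := ((pairW z j)%:E - Hdual L z)%E.
have elem z : ((pairW z j)%:E - Htilt L F0 G0 z)%E =
              (f (z + D)%R + (h - pairW D j)%:E)%E.
  rewrite /Htilt /f -addrA -/D hE pYD.
  case: (Hdual L (z + D)) => [r| |] //=.
  by congr (_%:E); lra.
have LtE : Ltilt L F0 G0 j = (LS L rho j + (h - pairW D j)%:E)%E.
  rewrite /Ltilt /LS -sup_shift.
  apply/eqP; rewrite eq_le; apply/andP; split.
    apply: ge_ereal_sup => _ [z _ <-]; rewrite elem.
    by apply: ereal_sup_ubound; exists (z + D).
  apply: ge_ereal_sup => _ [z _ <-].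
  apply: ereal_sup_ubound; exists (z - D) => //.
  by rewrite elem subrK.
rewrite LtE /Fisher -eD -/D hE (FM hL).
have -> : pairW D j = - ((2 * lam) * pairW Gp j) by rewrite /D eD pYN pYZ.
case: (LS L rho j) => [s| |] //=.
by congr (_%:E); lra.
Qed.
End Main.

Theorem theorem2p27 (R : realType) (S : state_flux R)
  (L : forall rho : sfZ S, TW S rho -> \bar R) (V : sfZ S -> \bar R)
  (hL : is_Lfunction L) (hV : is_quasipotential L V) :
  (* (i) rho in Dom_symdiss(F), with F(rho) = - eta *)
  (forall (rho : sfZ S) (eta : TWs S rho),
     dL0 L eta -> symdiss L (- eta) ->
     forall (j : TW S rho) (lam : R), 0 <= lam <= 1 ->
       let F := - eta in
       L rho j = (Ltilt L F ((1 - 2 * lam) *: F)%R j + Fisher L lam F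
                  - ((2 * lam) * pairW F j)%:E)%E
       /\ (0 <= Fisher L lam F)%E) /\
  (* (ii) rho in Dom(F^asym) *)
  (forall (rho : sfZ S) (eta : TWs S rho) (xi : TZs S rho),
     dL0 L eta -> dV V xi ->
     forall (j : TW S rho) (lam : R), 0 <= lam <= 1 ->
       let F := - eta in
       let Fsym := - (2^-1 *: dphiT xi) in
       L rho j = (Ltilt L F (F - (2 * lam) *: Fsym)%R j + Fisher L lam Fsym
                  - ((2 * lam) * pairW Fsym j)%:E)%E
       /\ (0 <= Fisher L lam Fsym)%E) /\
  (* (iii) rho in Dom_symdiss(F^asym) *)
  (forall (rho : sfZ S) (eta : TWs S rho) (xi : TZs S rho),
     dL0 L eta -> dV V xi -> symdiss L (- eta) ->
     forall (j : TW S rho) (lam : R), 0 <= lam <= 1 ->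
       let F := - eta in
       let Fasym := F + 2^-1 *: dphiT xi in
       L rho j = (Ltilt L F (F - (2 * lam) *: Fasym)%R j + Fisher L lam Fasym
                  - ((2 * lam) * pairW Fasym j)%:E)%E
       /\ (0 <= Fisher L lam Fasym)%E).
Proof.
have h2 : (2 : R) != 0 by apply/eqP; lra.
have [_ [_ hVd]] := hV.
split; [|split].
- move=> rho eta _ hs j lam hl F.
  have eF : F = - eta by [].
  rewrite -eF in hs.
  have hneg : (Hdual L (- (2 *: F))%R <= 0)%E.
    have := hs F; rewrite subrr => e0.
    have -> : (- (2 *: F)) = - F - F by rewrite scaler_nat mulr2n opprD.
    by rewrite -e0; apply: H0.
  have [fin hF] := @fisher_ok _ _ _ hL _ lam F hl hneg.
  split => //; apply: tilt => //.
  by rewrite scalerBl scale1r addrAC subrr add0r.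
- move=> rho eta xi _ hv j lam hl F Fsym.
  have hneg : (Hdual L (- (2 *: Fsym))%R <= 0)%E.
    have -> : (- (2 *: Fsym)) = dphiT xi.
      by rewrite /Fsym scalerN opprK scalerA mulfV // scale1r.
    by rewrite (hVd rho xi hv).
  have [fin hF] := @fisher_ok _ _ _ hL _ lam Fsym hl hneg.
  split => //; apply: tilt => //.
  by rewrite addrAC subrr add0r.
- move=> rho eta xi _ hv hs j lam hl F Fasym.
  have eF : F = - eta by [].
  rewrite -eF in hs.
  have hneg : (Hdual L (- (2 *: Fasym))%R <= 0)%E.
    have := hs (- F - dphiT xi).
    have -> : - (- F - dphiT xi) - F = dphiT xi.
      by rewrite opprB opprK addrK.
    rewrite (hVd rho xi hv) => e0.
    have -> : (- (2 *: Fasym)) = - F - dphiT xi - F.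
      rewrite /Fasym scalerDr scalerA mulfV // scale1r scaler_nat mulr2n.
      by rewrite !opprD addrAC.
    by rewrite e0.
  have [fin hF] := @fisher_ok _ _ _ hL _ lam Fasym hl hneg.
  split => //; apply: tilt => //.
  by rewrite addrAC subrr add0r.
Qed.
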